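(* In the linear setting described in the context, for every $1\le t\le T$, $$\|\overline{\mathbf q}_t-\mathbf x_t\|_2^2\le\|\boldsymbol\theta_{t-1}\cdots\boldsymbol\theta_0\|_2^2\Big(\alpha^{2t}\|\mathbf z^\perp\|_2^2+\|\mathbf z^\parallel\|_2^2+\gamma_t\|\mathbf z\|_2^2\big(\gamma_t\alpha^2(1-\alpha^{t-1})^2+2(\alpha-\alpha^t)\big)\Big),$$ where $\gamma_t=\max_{0\le s\le t}\big(1+\kappa(\overline{\boldsymbol\theta}_s)^2\big)\|\mathbf I-\overline{\boldsymbol\theta}_s^T\overline{\boldsymbol\theta}_s\|_2$ with $\overline{\boldsymbol\theta}_0=\mathbf I$ and $\overline{\boldsymbol\theta}_s=\boldsymbol\theta_{s-1}\cdots\boldsymbol\theta_0$. Moreover, if all $\boldsymbol\theta_t$ are orthogonal matrices, then $$\|\overline{\mathbf q}_t-\mathbf x_t\|_2^2=\alpha^{2t}\|\mathbf z^\perp\|_2^2+\|\mathbf z^\parallel\|_2^2.$$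
   Context: Linear setting: fix integers $1\le r\le d$, $T\ge1$, a control regularization constant $c>0$, and $\alpha=\frac{c}{1+c}$. For $t=0,\dots,T$, $Z^t\subset\mathbb{R}^d$ is an $r$-dimensional linear subspace (the tangent space of the $t$-th embedding manifold), $\mathbf P_t$ is the orthogonal projection onto $Z^t$, $\mathbf Q_t=\mathbf I-\mathbf P_t$, and $\mathbf K_t=(c\mathbf I+\mathbf Q_t^T\mathbf Q_t)^{-1}\mathbf Q_t^T\mathbf Q_t$. For $t=0,\dots,T-1$, $\boldsymbol\theta_t\in\mathbb{R}^{d\times d}$ is invertible with $\boldsymbol\theta_tZ^t=Z^{t+1}$. The clean trajectory is $\mathbf x_0\in Z^0$, $\mathbf x_{t+1}=\boldsymbol\theta_t\mathbf x_t$. Given a perturbation $\mathbf z\in\mathbb{R}^d$, write $\mathbf z^\parallel=\mathbf P_0\mathbf z$ and $\mathbf z^\perp=\mathbf z-\mathbf P_0\mathbf z$; the controlled perturbed trajectory is $\overline{\mathbf q}_0=\mathbf x_0+\mathbf z$, $\overline{\mathbf q}_{t+1}=\boldsymbol\theta_t(\mathbf I-\mathbf K_t)\overline{\mathbf q}_t$ (i.e. $\overline{\mathbf q}_{t+1}=\boldsymbol\theta_t(\overline{\mathbf q}_t+\mathbf u_t)$ with the feedback control $\mathbf u_t=-\mathbf K_t\overline{\mathbf q}_t$ minimizing $\frac12\|\mathbf Q_t(\overline{\mathbf q}_t+\mathbf u)\|_2^2+\frac c2\|\mathbf u\|_2^2$). $\|\cdot\|_2$ is the Euclidean norm on vectors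 and the spectral norm on matrices; $\kappa(\mathbf A)=\|\mathbf A\|_2\|\mathbf A^{-1}\|_2$. *)

(* Defs.v *)
From HB Require Import structures.
From mathcomp Require Import all_boot all_order all_algebra.
From mathcomp Require Import boolp classical_sets reals.
Set Implicit Arguments. Unset Strict Implicit. Unset Printing Implicit Defensive.
Import Order.TTheory GRing.Theory Num.Theory.
Local Open Scope ring_scope.

Section LinDefs.
Variable R : realType.
Variable d : nat.

Definition vnorm (v : 'cV[R]_d) : R := Num.sqrt (\sum_(i < d) v i 0 ^+ 2).

Definition specnorm (A : 'M[R]_d) : R :=
  sup [set vnorm (A *m v) | v in [set v : 'cV[R]_d | vnorm v <= 1]]%classic.

Definition kappa (A : 'M[R]_d) : R := specnorm A * specnorm (invmx A).

(* P is the orthogonal projection onto the row space of Z (a subspace of R^d,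
   vectors identified with their transposes) *)
Definition is_orth_proj (P Z : 'M[R]_d) : Prop :=
  P^T = P /\ P *m P = P /\ (P == Z)%MS.

Definition Qm (P : 'M[R]_d) : 'M[R]_d := 1%:M - P.
Definition Km (c : R) (P : 'M[R]_d) : 'M[R]_d :=
  invmx (c%:M + (Qm P)^T *m Qm P) *m ((Qm P)^T *m Qm P).

Fixpoint xtraj (theta : nat -> 'M[R]_d) (x0 : 'cV[R]_d) (t : nat) : 'cV[R]_d :=
  match t with
  | 0 => x0
  | t'.+1 => theta t' *m xtraj theta x0 t'
  end.

Fixpoint qtraj (c : R) (theta P : nat -> 'M[R]_d) (x0 z : 'cV[R]_d) (t : nat)
  : 'cV[R]_d :=
  match t with
  | 0 => x0 + z
  | t'.+1 => theta t' *m ((1%:M - Km c (P t')) *m qtraj c theta P x0 z t')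
  end.

Fixpoint thetabar (theta : nat -> 'M[R]_d) (s : nat) : 'M[R]_d :=
  match s with
  | 0 => 1%:M
  | s'.+1 => theta s' *m thetabar theta s'
  end.

Definition gamma (theta : nat -> 'M[R]_d) (t : nat) : R :=
  \big[Num.max/0]_(s < t.+1)
    ((1 + kappa (thetabar theta s) ^+ 2) *
     specnorm (1%:M - (thetabar theta s)^T *m thetabar theta s)).

End LinDefs.

(* Main.v *)
Require Import Defs.
From HB Require Import structures.
From mathcomp Require Import all_boot all_order all_algebra.
From mathcomp Require Import boolp classical_sets reals.
From mathcomp Require Import ring lra.
Import Order.TTheory GRing.Theory Num.Theory.
Local Open Scope ring_scope.

Set Implicit Arguments. Unset Strict Implicit. Unset Printing Implicit Defensive.

Section Vec.
Variable R : realType.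
Variable d : nat.
Implicit Types u v w : 'cV[R]_d.

Definition dot u w : R := \sum_(i < d) u i 0 * w i 0.

Lemma dotE u w : dot u w = (u^T *m w) 0 0.
Proof. by rewrite /dot !mxE; apply: eq_bigr => i _; rewrite !mxE. Qed.

Lemma dotC u w : dot u w = dot w u.
Proof. by apply: eq_bigr => i _; rewrite mulrC. Qed.

Lemma dotDr u v w : dot u (v + w) = dot u v + dot u w.
Proof. by rewrite /dot -big_split; apply: eq_bigr => i _; rewrite !mxE mulrDr. Qed.

Lemma dotDl u v w : dot (v + w) u = dot v u + dot w u.
Proof. by rewrite dotC dotDr !(dotC u). Qed.

Lemma dotZr k u w : dot u (k *: w) = k * dot u w.
Proof. by rewrite /dot mulr_sumr; apply: eq_bigr => i _; rewrite !mxE mulrCA. Qed.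

Lemma dotZl k u w : dot (k *: u) w = k * dot u w.
Proof. by rewrite dotC dotZr dotC. Qed.

Lemma dotNr u w : dot u (- w) = - dot u w.
Proof. by rewrite -scaleN1r dotZr mulN1r. Qed.

Lemma dotNl u w : dot (- u) w = - dot u w.
Proof. by rewrite dotC dotNr dotC. Qed.

Lemma dotBr u v w : dot u (v - w) = dot u v - dot u w.
Proof. by rewrite dotDr dotNr. Qed.

Lemma dotBl u v w : dot (v - w) u = dot v u - dot w u.
Proof. by rewrite dotDl dotNl. Qed.

Lemma dot0r u : dot u 0 = 0.
Proof. by rewrite /dot big1 // => i _; rewrite mxE mulr0. Qed.

Lemma dot0l u : dot 0 u = 0.
Proof. by rewrite dotC dot0r. Qed.

Lemma dot_mul (A : 'M[R]_d) u w : dot (A *m u) w = dot u (A^T *m w).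
Proof. by rewrite !dotE trmx_mul mulmxA. Qed.

Lemma dot_ge0 u : 0 <= dot u u.
Proof. by apply: sumr_ge0 => i _; rewrite -expr2 sqr_ge0. Qed.

Lemma vnorm_ge0 u : 0 <= vnorm u.
Proof. exact: sqrtr_ge0. Qed.

Lemma vnorm_sq u : vnorm u ^+ 2 = dot u u.
Proof.
rewrite /vnorm sqr_sqrtr; last by apply: sumr_ge0 => i _; rewrite sqr_ge0.
by apply: eq_bigr => i _; rewrite expr2.
Qed.

Lemma dot_eq0 u : dot u u = 0 -> u = 0.
Proof.
move=> /eqP; rewrite /dot psumr_eq0; last by move=> i _; rewrite -expr2 sqr_ge0.
move=> /allP H; apply/matrixP => i j; rewrite mxE (ord1 j).
have := H i (mem_index_enum _); rewrite /= mulf_eq0 orbb => /eqP ->.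
by [].
Qed.

Lemma vnorm_eq0 u : vnorm u = 0 -> u = 0.
Proof. by move=> H; apply: dot_eq0; rewrite -vnorm_sq H expr0n. Qed.

Lemma vnormZ k u : vnorm (k *: u) = `|k| * vnorm u.
Proof.
apply/eqP; rewrite -(eqrXn2 (n:=2)) //; last by rewrite mulr_ge0 ?vnorm_ge0.
  by rewrite exprMn !vnorm_sq dotZl dotZr mulrA -expr2 real_normK ?num_real.
by rewrite vnorm_ge0.
Qed.

Lemma vnormN u : vnorm (- u) = vnorm u.
Proof. by rewrite -scaleN1r vnormZ normrN1 mul1r. Qed.

Lemma CS u w : dot u w <= vnorm u * vnorm w.
Proof.
set a := vnorm w; set b := vnorm u.
have H := dot_ge0 (a *: u - b *: w).
rewrite dotBl !dotBr !dotZl !dotZr -!vnorm_sq (dotC w u) -/a -/b in H.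
have ha : 0 <= a by apply: vnorm_ge0.
have hb : 0 <= b by apply: vnorm_ge0.
have [a0|apos] := eqVneq a 0.
  by have := @vnorm_eq0 w a0 => ->; rewrite dot0r a0 mulr0.
have [b0|bpos] := eqVneq b 0.
  by have := @vnorm_eq0 u b0 => ->; rewrite dot0l b0 mul0r.
have hab : 0 < a * b by rewrite mulr_gt0 // lt_def ?apos ?bpos ?ha ?hb.
have : a * b * dot u w <= a * b * (b * a).
  by nra.
by rewrite ler_pM2l // mulrC.
Qed.

Lemma CSabs u w : `|dot u w| <= vnorm u * vnorm w.
Proof.
rewrite ler_norml CS andbT; have := CS (- u) w.
by rewrite dotNl vnormN lerNl.
Qed.

End Vec.


Section Spec.
Variable R : realType.
Variable d : nat.
Implicit Types u v w : 'cV[R]_d.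
Implicit Types A : 'M[R]_d.

Lemma frob_bound (A : 'M[R]_d) : exists F : R, 0 <= F /\
  forall v, vnorm (A *m v) ^+ 2 <= F * vnorm v ^+ 2.
Proof.
exists (\sum_(i < d) dot (row i A)^T (row i A)^T); split.
  by apply: sumr_ge0 => i _; apply: dot_ge0.
move=> v; rewrite vnorm_sq {1}/dot mulr_suml; apply: ler_sum => i _.
have -> : (A *m v) i 0 = dot (row i A)^T v.
  by rewrite mxE /dot; apply: eq_bigr => j _; rewrite !mxE.
rewrite -expr2 -vnorm_sq -exprMn -real_normK ?num_real //.
rewrite lerXn2r ?nnegrE ?normr_ge0 ?mulr_ge0 ?vnorm_ge0 //.
exact: CSabs.
Qed.

Definition Sset (A : 'M[R]_d) :=
  [set vnorm (A *m v) | v in [set v : 'cV[R]_d | vnorm v <= 1]]%classic.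

Lemma Sset_has_sup A : has_sup (Sset A).
Proof.
split.
  exists (vnorm (A *m 0)), 0 => //=.
  have -> : vnorm (0 : 'cV[R]_d) = 0.
    by rewrite /vnorm big1 ?sqrtr0 // => i _; rewrite mxE expr0n.
  by [].
have [F [F0 HF]] := frob_bound A.
exists (1 + F) => x [v /= hv <-].
have h1 : vnorm (A *m v) ^+ 2 <= F.
  apply: (le_trans (HF v)); rewrite -[leRHS]mulr1 ler_wpM2l //.
  by rewrite -(expr1n _ 2) lerXn2r ?nnegrE ?vnorm_ge0.
have h2 := vnorm_ge0 (A *m v).
nra.
Qed.

Lemma specnorm_ge0 A : 0 <= specnorm A.
Proof.
have := sup_upper_bound (Sset_has_sup A); apply.
exists 0 => /=.
  by rewrite /vnorm big1 ?sqrtr0 // => i _; rewrite mxE expr0n.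
by rewrite mulmx0 /vnorm big1 ?sqrtr0 // => i _; rewrite mxE expr0n.
Qed.

Lemma specnorm_le A v : vnorm (A *m v) <= specnorm A * vnorm v.
Proof.
have [v0|vn0] := eqVneq (vnorm v) 0.
  by rewrite v0 mulr0 (vnorm_eq0 v0) mulmx0 /vnorm big1 ?sqrtr0 // => i _;
     rewrite mxE expr0n.
have vp : 0 < vnorm v by rewrite lt_def vn0 vnorm_ge0.
have H : vnorm (A *m ((vnorm v)^-1 *: v)) <= specnorm A.
  apply: (sup_upper_bound (Sset_has_sup A)).
  exists ((vnorm v)^-1 *: v) => //=.
  by rewrite vnormZ ger0_norm ?invr_ge0 ?vnorm_ge0 // mulVf.
rewrite -scalemxAr vnormZ ger0_norm ?invr_ge0 ?vnorm_ge0 // in H.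
by rewrite -ler_pdivrMr // mulrC.
Qed.

Lemma specnorm_ub A x : (forall v, vnorm v <= 1 -> vnorm (A *m v) <= x) ->
  specnorm A <= x.
Proof.
move=> H; apply: ge_sup; first by case: (Sset_has_sup A).
by move=> y [v /= hv <-]; apply: H.
Qed.

End Spec.


Lemma key_ineq (R : realFieldType) (n m Y B Iv e : R) :
  0 <= n -> 0 <= m -> 0 <= Y -> 0 <= B -> 0 <= Iv -> 0 <= e ->
  m ^+ 2 <= n * e * Y -> m ^+ 2 <= m * B * Y -> n <= Iv * m -> m <= B * n ->
  n ^+ 2 - m ^+ 2 <= e * n ^+ 2 ->
  n <= (1 + (B * Iv) ^+ 2) * e * Y.
Proof.
move=> n0 m0 Y0 B0 I0 e0 h1 h2 h3 h4 h5.
have [->|nn0] := eqVneq n 0.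
  by apply: mulr_ge0 => //; apply: mulr_ge0 => //; apply: addr_ge0 => //; apply: sqr_ge0.
have np : 0 < n by rewrite lt_def nn0 n0.
have mp : 0 < m.
  rewrite lt_def m0 andbT; apply/eqP => m00; rewrite m00 mulr0 in h3; lra.
have K : n * m ^+ 2 <= (m ^+ 2 + B ^+ 2 * n ^+ 2) * e * Y.
  have [hc|hc] := lerP (n ^+ 2) (m ^+ 2 + B ^+ 2 * n ^+ 2).
    have : n * m ^+ 2 <= n * (n * e * Y) by rewrite ler_pM2l.
    move=> h; apply: (le_trans h).
    have eY : 0 <= e * Y by apply: mulr_ge0.
    have := ler_wpM2r eY hc; nra.
  have hmB : m <= B * Y.
    by rewrite -(ler_pM2l mp) -expr2 mulrA.
  have Bp : 0 < B by nra.
  have he : 1 <= 2 * e.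
    have hm : m ^+ 2 <= B ^+ 2 * n ^+ 2 by rewrite -exprMn lerXn2r ?nnegrE ?mulr_ge0.
    have : n ^+ 2 <= 2 * e * n ^+ 2 by nra.
    rewrite -[X in X <= _]mul1r ler_pM2r //; apply: exprn_gt0 => //.
  have am : 2 * m * B * n <= m ^+ 2 + B ^+ 2 * n ^+ 2.
    have := sqr_ge0 (m - B * n); rewrite sqrrB; lra.
  have t1 : 2 * m * B * n * e * Y <= (m ^+ 2 + B ^+ 2 * n ^+ 2) * e * Y.
    by rewrite ler_wpM2r // ler_wpM2r.
  apply: le_trans t1.
  have : n * m ^+ 2 <= n * m * (2 * e) * m.
    have hh : 0 <= n * m ^+ 2 * (2 * e - 1) by rewrite mulr_ge0 ?mulr_ge0 ?sqr_ge0 // subr_ge0.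
    nra.
  move=> h; apply: (le_trans h).
  have : n * m * (2 * e) * m <= n * m * (2 * e) * (B * Y).
    by rewrite ler_wpM2l // mulr_ge0 // mulr_ge0 // mulr_ge0.
  move=> h'; apply: (le_trans h'); rewrite le_eqVlt; apply/orP; left; apply/eqP; ring.
have K2 : n * m ^+ 2 <= m ^+ 2 * ((1 + (B * Iv) ^+ 2) * e * Y).
  apply: (le_trans K).
  have hn : n ^+ 2 <= (Iv * m) ^+ 2 by rewrite lerXn2r ?nnegrE ?mulr_ge0.
  have : B ^+ 2 * n ^+ 2 <= B ^+ 2 * (Iv * m) ^+ 2 by rewrite ler_wpM2l ?sqr_ge0.
  have eY : 0 <= e * Y by apply: mulr_ge0.
  move=> h.
  have : (m ^+ 2 + B ^+ 2 * n ^+ 2) * (e * Y) <= (m ^+ 2 + B ^+ 2 * (Iv * m) ^+ 2) * (e * Y).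
    by rewrite ler_wpM2r // lerD2l.
  move=> h'; rewrite -mulrA (le_trans h') //; rewrite le_eqVlt; apply/orP; left; apply/eqP; ring.
have m2 : 0 < m ^+ 2 by apply: exprn_gt0.
by rewrite mulrC ler_pM2l in K2.
Qed.

Arguments key_ineq : clear implicits.


Section Proj.
Variable R : realType.
Variable d : nat.
Implicit Types u v w y : 'cV[R]_d.
Implicit Types A M P X : 'M[R]_d.

Lemma subidem m (X : 'M[R]_(m, d)) P : (X <= P)%MS -> P *m P = P -> X *m P = X.
Proof. by move=> /submxP [D ->] PP; rewrite -mulmxA PP. Qed.

Lemma L1 M P (P0 : 'M[R]_d) : P^T = P -> P0^T = P0 -> P *m P = P ->
  (P0 *m M^T <= P)%MS -> P *m M *m P0 = M *m P0.
Proof.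
move=> sP sP0 iP H; apply: trmx_inj.
by rewrite !trmx_mul sP sP0 mulmxA subidem.
Qed.

Lemma L2 M P (P0 : 'M[R]_d) : M \in unitmx -> P^T = P -> P0^T = P0 -> P0 *m P0 = P0 ->
  (P <= P0 *m M^T)%MS -> P0 *m invmx M *m P = invmx M *m P.
Proof.
move=> uM sP sP0 iP0 H; apply: trmx_inj.
rewrite !trmx_mul sP sP0 mulmxA subidem //.
have := submxMr (invmx M)^T H.
by rewrite -mulmxA -trmx_mul mulVmx // trmx1 mulmx1.
Qed.

Lemma proj_bound M P (P0 : 'M[R]_d) y : M \in unitmx -> P^T = P -> P *m P = P ->
  P0^T = P0 -> P0 *m P0 = P0 -> (P0 *m M^T == P)%MS -> P0 *m y = 0 ->
  let v := invmx M *m (P *m (M *m y)) in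
  P0 *m v = v /\
  vnorm v <= (1 + kappa M ^+ 2) * specnorm (1%:M - M^T *m M) * vnorm y.
Proof.
move=> uM sP iP sP0 iP0 /eqmxP eqP0 Py v.
have Pv : P0 *m v = v.
  by rewrite /v !mulmxA L2 // eqP0 submx_refl.
split => //.
have Mv : M *m v = P *m (M *m y) by rewrite /v mulKVmx.
have ha : dot v y = 0 by rewrite -Pv dot_mul sP0 Py dot0r.
have hc : dot (M *m v) (M *m v) = dot (M *m v) (M *m y).
  apply/eqP; rewrite -subr_eq0 -dotBr Mv dot_mul sP.
  by rewrite mulmxBr [P *m (P *m _)]mulmxA iP subrr dot0r.
have Ey : forall x : 'cV[R]_d, (1%:M - M^T *m M) *m x = x - M^T *m M *m x.
  by move=> x; rewrite mulmxBl mul1mx.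
have hd : dot (M *m v) (M *m y) = - dot v ((1%:M - M^T *m M) *m y).
  by rewrite dot_mul mulmxA Ey dotBr ha sub0r opprK.
have he : dot v v - dot (M *m v) (M *m v) = dot v ((1%:M - M^T *m M) *m v).
  by rewrite dot_mul mulmxA Ey dotBr.
apply: (@key_ineq _ _ (vnorm (M *m v))); rewrite ?vnorm_ge0 ?specnorm_ge0 //.
- rewrite vnorm_sq hc hd -dotNl -mulrA.
  apply: (le_trans (CS _ _)); rewrite vnormN ler_wpM2l ?vnorm_ge0 //.
  exact: specnorm_le.
- rewrite vnorm_sq hc -mulrA; apply: (le_trans (CS _ _)).
  rewrite ler_wpM2l ?vnorm_ge0 //; exact: specnorm_le.
- by rewrite -{1}(mulKmx uM v); apply: specnorm_le.
- exact: specnorm_le.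
- rewrite !vnorm_sq he; apply: (le_trans (CS _ _)).
  rewrite -vnorm_sq expr2 mulrCA ler_wpM2l ?vnorm_ge0 //.
  exact: specnorm_le.
Qed.

End Proj.


Section More.
Variable R : realType.
Variable d : nat.
Implicit Types u v w y : 'cV[R]_d.
Implicit Types A M P X : 'M[R]_d.

Lemma QT P : P^T = P -> (Qm P)^T = Qm P.
Proof.
move=> sP; rewrite /Qm -[in RHS]sP; apply/matrixP => i j; rewrite !mxE eq_sym.
by [].
Qed.

Lemma QQ P : P *m P = P -> Qm P *m Qm P = Qm P.
Proof.
by move=> iP; rewrite /Qm mulmxBl mul1mx mulmxBr mulmx1 iP subrr subr0.
Qed.

Lemma QtQ P : P^T = P -> P *m P = P -> (Qm P)^T *m Qm P = Qm P.
Proof. by move=> sP iP; rewrite QT // QQ. Qed.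

Lemma IK c P : P^T = P -> P *m P = P -> 0 < c ->
  1%:M - Km c P = (c / (1 + c)) *: 1%:M + (1 - c / (1 + c)) *: P.
Proof.
move=> sP iP c0.
have c1 : 1 + c != 0 by rewrite gt_eqF // ltr_wpDl.
have cn : c != 0 by rewrite gt_eqF.
have QQ : Qm P *m Qm P = Qm P by apply: QQ.
rewrite /Km QtQ //.
set A := c%:M + Qm P.
set N := c^-1 *: (1%:M - (1 + c)^-1 *: Qm P).
have AN : A *m N = 1%:M.
  rewrite /A /N mulmxDl mul_scalar_mx -scalemxAr mulmxBr mulmx1 -scalemxAr QQ.
  apply/matrixP => i j; rewrite !mxE; field; by rewrite c1 cn.
have uA : A \in unitmx by case: (mulmx1_unit AN).
have AQ : A *m Qm P = (1 + c) *: Qm P.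
  rewrite /A mulmxDl mul_scalar_mx QQ.
  by apply/matrixP => i j; rewrite !mxE; ring.
have -> : invmx A *m Qm P = (1 + c)^-1 *: Qm P.
  have h := mulKmx uA (Qm P); rewrite AQ -scalemxAr in h.
  by rewrite -{2}h scalerA mulVf // scale1r.
by apply/matrixP => i j; rewrite /Qm !mxE; field.
Qed.

Lemma vnorm_tri u w : vnorm (u + w) <= vnorm u + vnorm w.
Proof.
rewrite -(ler_pXn2r (n:=2)) // ?nnegrE ?addr_ge0 ?vnorm_ge0 //.
rewrite vnorm_sq dotDl !dotDr sqrrD -!vnorm_sq (dotC w u).
have := CS u w; lra.
Qed.

Lemma vnorm0 : vnorm (0 : 'cV[R]_d) = 0.
Proof. by rewrite /vnorm big1 ?sqrtr0 // => i _; rewrite mxE expr0n. Qed.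

Lemma vec_id (a b : R) k (zp zq w y : 'cV[R]_d) : a + b = 1 ->
  a *: (zp + a ^+ k *: zq + w) + b *: (zp + a ^+ k *: y + w) =
  zp + a ^+ k.+1 *: zq + (w + (b * a ^+ k) *: y).
Proof.
move=> ab; have -> : b = 1 - a by rewrite -ab addrC addKr.
by apply/matrixP => i j; rewrite !mxE exprS; ring.
Qed.

Lemma bigmax_ge n (F : nat -> R) j : (j < n)%N ->
  F j <= \big[Num.max/0]_(s < n) F s.
Proof.
elim: n F j => // n IH F j hj; rewrite big_ord_recl /=.
case: j hj => [|j] hj; first by rewrite le_max lexx.
rewrite le_max; apply/orP; right.
have -> : \big[Num.max/0]_(i < n) F (lift ord0 i) = \big[Num.max/0]_(i < n) (fun k => F k.+1) i.
  by apply: eq_bigr => i _; rewrite lift0.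
exact: (IH (fun k => F k.+1) j).
Qed.

End More.


Section Traj.
Variables (R : realType) (d T : nat) (c : R) (Z P theta : nat -> 'M[R]_d)
  (x0 z : 'cV[R]_d).
Hypothesis c0 : 0 < c.
Hypothesis HP : forall t, (t <= T)%N -> is_orth_proj (P t) (Z t).
Hypothesis Hth : forall t, (t < T)%N ->
  theta t \in unitmx /\ (Z t *m (theta t)^T == Z t.+1)%MS.
Hypothesis Hx0 : (x0^T <= Z 0)%MS.

Definition alpha := c / (1 + c).
Definition zperp := z - P 0 *m z.
Definition zpar := P 0 *m z.

Fixpoint wt (k : nat) : 'cV[R]_d :=
  match k with
  | 0 => 0
  | k'.+1 => wt k' + ((1 - alpha) * alpha ^+ k') *:
      (invmx (thetabar theta k') *m (P k' *m (thetabar theta k' *m zperp)))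
  end.

Lemma Psym t : (t <= T)%N -> (P t)^T = P t.
Proof. by move=> h; case: (HP h). Qed.
Lemma Pidem t : (t <= T)%N -> P t *m P t = P t.
Proof. by move=> h; case: (HP h) => _ []. Qed.
Lemma PZ t : (t <= T)%N -> (P t == Z t)%MS.
Proof. by move=> h; case: (HP h) => _ []. Qed.

Lemma unitM k : (k <= T)%N -> thetabar theta k \in unitmx.
Proof.
elim: k => [|k IH] h /=; first exact: unitmx1.
by rewrite unitmx_mul (Hth h).1 IH // ltnW.
Qed.

Lemma eqP0 k : (k <= T)%N -> (P 0 *m (thetabar theta k)^T == P k)%MS.
Proof.
elim: k => [|k IH] h /=; first by rewrite trmx1 mulmx1 submx_refl.
apply/eqmxP; rewrite trmx_mul mulmxA.
have hk : (k <= T)%N by rewrite ltnW.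
have e1 := eqmxMr (theta k)^T (eqmxP (IH hk)).
have e2 := eqmxMr (theta k)^T (eqmxP (PZ hk)).
have e3 := eqmxP (Hth h).2.
have e4 := eqmx_sym (eqmxP (PZ h)).
exact: eqmx_trans e1 (eqmx_trans e2 (eqmx_trans e3 e4)).
Qed.

Lemma xin k : (k <= T)%N -> ((xtraj theta x0 k)^T <= Z k)%MS.
Proof.
elim: k => [|k IH] h //=.
rewrite trmx_mul; apply: submx_trans (submxMr _ (IH (ltnW h))) _.
by case/andP: (Hth h).2.
Qed.

Lemma Pfix k : (k <= T)%N -> P k *m xtraj theta x0 k = xtraj theta x0 k.
Proof.
move=> h; apply: trmx_inj; rewrite trmx_mul Psym //.
apply: subidem; last exact: Pidem.
apply: submx_trans (xin h) _; by case/andP: (PZ h).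
Qed.

Lemma P0perp : P 0 *m zperp = 0.
Proof. by rewrite /zperp mulmxBr mulmxA Pidem // subrr. Qed.

Lemma lin2 (M : 'M[R]_d) (a b : R) (u v : 'cV[R]_d) :
  M *m (a *: u + b *: v) = a *: (M *m u) + b *: (M *m v).
Proof. by rewrite mulmxDr -!scalemxAr. Qed.

Lemma main_rep k : (k <= T)%N ->
  qtraj c theta P x0 z k - xtraj theta x0 k =
    thetabar theta k *m (zpar + alpha ^+ k *: zperp + wt k) /\
  P 0 *m wt k = wt k.
Proof.
elim: k => [|k IH] h.
  rewrite /= mul1mx expr0 scale1r addr0 mulmx0 /zpar /zperp; split => //.
  by rewrite addrC addrA addNr add0r addrC subrK.
have hk : (k <= T)%N by rewrite ltnW.
have [IH1 IH2] := IH hk.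
set M := thetabar theta k.
have uM : M \in unitmx by apply: unitM.
have sub1 : (P 0 *m M^T <= P k)%MS by case/andP: (eqP0 hk).
have L1' := L1 (Psym hk) (Psym (leq0n T)) (Pidem hk) sub1.
have Kx : (1%:M - Km c (P k)) *m xtraj theta x0 k = xtraj theta x0 k.
  rewrite IK ?Psym ?Pidem // mulmxDl -!scalemxAl !mul1mx Pfix //.
  by rewrite -scalerDl addrC subrK scale1r.
set y := invmx M *m (P k *m (M *m zperp)).
have PMy : P k *m (M *m zperp) = M *m y by rewrite /y mulKVmx.
have PMfix : forall u : 'cV[R]_d, P 0 *m u = u -> P k *m (M *m u) = M *m u.
  by move=> u hu; rewrite -hu !mulmxA L1'.
split.
  rewrite /= -/M -Kx -mulmxBr -mulmxBr IH1 -mulmxA; congr (_ *m _).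
  rewrite IK ?Psym ?Pidem // -/alpha mulmxDl -!scalemxAl !mul1mx.
  have E1 : P k *m (M *m (zpar + alpha ^+ k *: zperp + wt k)) =
      M *m (zpar + alpha ^+ k *: y + wt k).
    rewrite !mulmxDr -!scalemxAr PMy PMfix; last by rewrite /zpar mulmxA Pidem.
    by rewrite PMfix.
  rewrite E1 -(@vec_id _ _ alpha (1 - alpha)); last by rewrite addrC subrK.
  by rewrite lin2.
have pb := (proj_bound uM (Psym hk) (Pidem hk) (Psym (leq0n T))
   (Pidem (leq0n T)) (eqP0 hk) P0perp).1.
by rewrite /= mulmxDr -scalemxAr IH2 -/M -/y pb.
Qed.

Lemma alpha_gt0 : 0 < alpha.
Proof. by rewrite /alpha divr_gt0 // ltr_wpDl. Qed.

Lemma alpha_lt1 : alpha < 1.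
Proof.
have h : 0 < 1 + c by rewrite ltr_wpDl.
by rewrite /alpha ltr_pdivrMr // mul1r ltr_pwDl.
Qed.

Lemma dot_par_perp : dot zpar zperp = 0.
Proof. by rewrite /zpar dot_mul Psym // P0perp dot0r. Qed.

Lemma z_split : vnorm z ^+ 2 = vnorm zpar ^+ 2 + vnorm zperp ^+ 2.
Proof.
have hz : z = zpar + zperp by rewrite /zpar /zperp addrC subrK.
rewrite [in LHS]hz !vnorm_sq (dotDl _ zpar zperp) (dotDr zpar zpar zperp).
rewrite (dotDr zperp zpar zperp) dot_par_perp (dotC zperp zpar) dot_par_perp.
by rewrite addr0 add0r.
Qed.

Lemma zperp_le : vnorm zperp <= vnorm z.
Proof.
rewrite -(ler_pXn2r (n:=2)) // ?nnegrE ?vnorm_ge0 // z_split lerDr.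
exact: sqr_ge0.
Qed.

Definition Fg (s : nat) : R :=
  (1 + kappa (thetabar theta s) ^+ 2) *
     specnorm (1%:M - (thetabar theta s)^T *m thetabar theta s).

Lemma Fg_ge0 s : 0 <= Fg s.
Proof.
by rewrite /Fg mulr_ge0 ?specnorm_ge0 // addr_ge0 // sqr_ge0.
Qed.

Lemma gamma_ge j t : (j <= t)%N -> Fg j <= gamma theta t.
Proof. by move=> h; apply: (bigmax_ge Fg). Qed.

Definition Pi j := invmx (thetabar theta j) *m (P j *m (thetabar theta j *m zperp)).

Lemma Pi_bound j : (j <= T)%N -> vnorm (Pi j) <= Fg j * vnorm z.
Proof.
move=> h.
have pb := (proj_bound (unitM h) (Psym h) (Pidem h) (Psym (leq0n T))
   (Pidem (leq0n T)) (eqP0 h) P0perp).2.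
apply: (le_trans pb); rewrite ler_wpM2l ?zperp_le //.
exact: Fg_ge0.
Qed.

Lemma w_bound t G : (t <= T)%N -> (forall j, (j < t)%N -> vnorm (Pi j) <= G * vnorm z) ->
  0 <= G -> forall k, (1 <= k <= t)%N ->
  vnorm (wt k) <= G * vnorm z * (alpha - alpha ^+ k).
Proof.
move=> ht HG G0; elim => // k IH /andP [_ hk].
have a0 := alpha_gt0; have a1 := alpha_lt1.
case: k IH hk => [|k] IH hk.
  rewrite /= mul1mx invmx1 mul1mx P0perp scaler0 addr0 vnorm0.
  by rewrite expr1 subrr mulr0.
have IH' := IH (ltnW hk).
rewrite /=; apply: (le_trans (vnorm_tri _ _)).
rewrite vnormZ ger0_norm; last by rewrite mulr_ge0 ?subr_ge0 ?exprn_ge0 ?ltW.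
have hP := HG k.+1 hk; rewrite -/(Pi k.+1).
have hs : 0 <= (1 - alpha) * alpha ^+ k.+1 by rewrite mulr_ge0 ?subr_ge0 ?exprn_ge0 ?ltW.
have := ler_wpM2l hs hP.
have -> : G * vnorm z * (alpha - alpha ^+ k.+2) =
   G * vnorm z * (alpha - alpha ^+ k.+1) + (1 - alpha) * alpha ^+ k.+1 * (G * vnorm z).
  by rewrite [alpha ^+ k.+2]exprS; ring.
move=> h2; exact: lerD.
Qed.

Lemma MtM_orth : (forall t, (t < T)%N -> (theta t)^T *m theta t = 1%:M) ->
  forall k, (k <= T)%N -> (thetabar theta k)^T *m thetabar theta k = 1%:M.
Proof.
move=> Ho; elim => [|k IH] h /=; first by rewrite trmx1 mulmx1.
by rewrite trmx_mul -mulmxA (mulmxA (theta k)^T) Ho // mul1mx IH // ltnW.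
Qed.

Lemma Pi_zero : (forall t, (t < T)%N -> (theta t)^T *m theta t = 1%:M) ->
  forall j, (j <= T)%N -> Pi j = 0.
Proof.
move=> Ho j h; apply: vnorm_eq0; apply/eqP; rewrite eq_le vnorm_ge0 andbT.
have e0 : specnorm (1%:M - (thetabar theta j)^T *m thetabar theta j) = 0.
  rewrite (MtM_orth Ho h) subrr.
  apply/eqP; rewrite eq_le specnorm_ge0 andbT; apply: specnorm_ub => v _.
  by rewrite mul0mx vnorm0.
apply: (le_trans (Pi_bound h)).
by rewrite /Fg e0 mulr0 mul0r.
Qed.

Lemma w_zero : (forall t, (t < T)%N -> (theta t)^T *m theta t = 1%:M) ->
  forall k, (k <= T)%N -> wt k = 0.
Proof.
move=> Ho; elim => [|k IH] h //=.
have hk : (k <= T)%N by apply: ltnW.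
by rewrite -/(Pi k) (Pi_zero Ho hk) scaler0 addr0 IH.
Qed.

End Traj.


Unset Implicit Arguments.

Lemma dot_pp (R : realType) (d T : nat) (Z P : nat -> 'M[R]_d) (z : 'cV[R]_d) a :
  (forall t, (t <= T)%N -> is_orth_proj (P t) (Z t)) ->
  dot (zpar P z + a *: zperp P z) (zpar P z + a *: zperp P z) =
  vnorm (zpar P z) ^+ 2 + a ^+ 2 * vnorm (zperp P z) ^+ 2.
Proof.
move=> HP; rewrite dotDl !dotDr !dotZl !dotZr (dotC (zperp P z)) (dot_par_perp z HP).
by rewrite !vnorm_sq; ring.
Qed.

Theorem theorem1 (R : realType) (r d T : nat) (c : R)
  (Z P theta : nat -> 'M[R]_d) (x0 z : 'cV[R]_d) :
  (1 <= r)%N -> (r <= d)%N -> (1 <= T)%N -> 0 < c ->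
  (forall t, (t <= T)%N -> \rank (Z t) = r /\ is_orth_proj (P t) (Z t)) ->
  (forall t, (t < T)%N ->
     theta t \in unitmx /\ (Z t *m (theta t)^T == Z t.+1)%MS) ->
  (x0^T <= Z 0)%MS ->
  let alpha := c / (1 + c) in
  let zpar := P 0 *m z in
  let zperp := z - P 0 *m z in
  (forall t, (1 <= t <= T)%N ->
     vnorm (qtraj c theta P x0 z t - xtraj theta x0 t) ^+ 2 <=
     specnorm (thetabar theta t) ^+ 2 *
       (alpha ^+ (2 * t) * vnorm zperp ^+ 2 + vnorm zpar ^+ 2
        + gamma theta t * vnorm z ^+ 2 *
          (gamma theta t * alpha ^+ 2 * (1 - alpha ^+ t.-1) ^+ 2
           + 2 * (alpha - alpha ^+ t))))
  /\
  ((forall t, (t < T)%N -> (theta t)^T *m theta t = 1%:M) ->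
   forall t, (1 <= t <= T)%N ->
     vnorm (qtraj c theta P x0 z t - xtraj theta x0 t) ^+ 2 =
     alpha ^+ (2 * t) * vnorm zperp ^+ 2 + vnorm zpar ^+ 2).
Proof.
move=> _ _ _ c0 Hall Hth Hx0 al zp zq.
have HP : forall t, (t <= T)%N -> is_orth_proj (P t) (Z t).
  by move=> t h; case: (Hall t h).
rewrite /al /zp /zq -/(alpha c) -/(zpar P z) -/(zperp P z).
have a0 := alpha_gt0 c0; have a1 := alpha_lt1 c0.
split.
  move=> t /andP [t1 tT].
  have eat : alpha c ^+ t = alpha c * alpha c ^+ t.-1.
    by case: t t1 {tT} => // t _; rewrite exprS.
  have [rep _] := main_rep z c0 HP Hth Hx0 tT.
  rewrite rep.
  have hpp := @dot_pp R d T Z P z (alpha c ^+ t) HP.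
  set M := thetabar theta t.
  set p := zpar P z + alpha c ^+ t *: zperp P z.
  set w := wt c P theta z t.
  set G := gamma theta t.
  have G0 : 0 <= G by apply: le_trans (Fg_ge0 theta 0) (gamma_ge theta (leq0n t)).
  have hw : vnorm w <= G * vnorm z * (alpha c - alpha c ^+ t).
    apply: (w_bound c0 HP tT) => //; last by rewrite t1 leqnn.
    move=> j hj; apply: (le_trans (Pi_bound z HP Hth (leq_trans (ltnW hj) tT))).
    by rewrite ler_wpM2r ?vnorm_ge0 // gamma_ge // ltnW.
  have hnz := z_split z HP.
  have at1 : alpha c ^+ t <= 1 by rewrite exprn_ile1 // ltW.
  have at0 : 0 <= alpha c ^+ t by rewrite exprn_ge0 // ltW.
  have hp : vnorm p <= vnorm z.
    rewrite -(ler_pXn2r (n:=2)) // ?nnegrE ?vnorm_ge0 // vnorm_sq hpp hnz lerD2l.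
    rewrite -[leRHS]mul1r ler_wpM2r ?sqr_ge0 //.
    by rewrite -(expr1n _ 2) lerXn2r ?nnegrE.
  have hu : vnorm (p + w) ^+ 2 <= alpha c ^+ (2 * t) * vnorm (zperp P z) ^+ 2 +
      vnorm (zpar P z) ^+ 2 + G * vnorm z ^+ 2 *
      (G * alpha c ^+ 2 * (1 - alpha c ^+ t.-1) ^+ 2 + 2 * (alpha c - alpha c ^+ t)).
    rewrite vnorm_sq (dotDl (p + w) p w) (dotDr p p w) (dotDr w p w) hpp (dotC w p) -vnorm_sq.
    have cs := CS p w.
    have nw0 := vnorm_ge0 w; have np0 := vnorm_ge0 p; have nz0 := vnorm_ge0 z.
    have W0 : 0 <= G * vnorm z * (alpha c - alpha c ^+ t).
      rewrite mulr_ge0 ?mulr_ge0 // subr_ge0 eat.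
      by rewrite ger_pMr // exprn_ile1 // ltW.
    have e1 : dot p w <= vnorm z * (G * vnorm z * (alpha c - alpha c ^+ t)).
      apply: (le_trans cs); apply: ler_pM => //.
    have e2 : vnorm w ^+ 2 <= (G * vnorm z * (alpha c - alpha c ^+ t)) ^+ 2.
      by rewrite lerXn2r ?nnegrE.
    have e3 : alpha c ^+ (2 * t) = (alpha c ^+ t) ^+ 2 by rewrite mulnC exprM.
    rewrite e3; move: e1 e2; rewrite eat => e1 e2.
    have -> : G * vnorm z ^+ 2 * (G * alpha c ^+ 2 * (1 - alpha c ^+ t.-1) ^+ 2 + 2 * (alpha c - alpha c * alpha c ^+ t.-1)) =
      2 * (vnorm z * (G * vnorm z * (alpha c - alpha c * alpha c ^+ t.-1))) + (G * vnorm z * (alpha c - alpha c * alpha c ^+ t.-1)) ^+ 2 by ring.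
    lra.
  apply: (le_trans (y := (specnorm M * vnorm (p + w)) ^+ 2)).
    rewrite lerXn2r ?nnegrE ?vnorm_ge0 ?mulr_ge0 ?specnorm_ge0 ?vnorm_ge0 //; exact: specnorm_le.
  by rewrite exprMn ler_wpM2l ?sqr_ge0.
move=> Ho t /andP [t1 tT].
have [rep _] := main_rep z c0 HP Hth Hx0 tT.
rewrite rep (w_zero c z HP Hth Ho tT) addr0 vnorm_sq dot_mul mulmxA.
rewrite (MtM_orth Ho tT) mul1mx (@dot_pp R d T Z P z _ HP) mulnC exprM.
by rewrite addrC.
Qed.
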